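(* Let $G_1, G_2$ be two graphs on the same vertex set $V$. Let $A \subseteq S(G_2)$ and $B \subseteq V$ be such that $N_{G_1}(B) \cup N_{G_2}(B) \subseteq A$. Suppose $E(G_1) \triangle E(G_2) \subseteq \binom{A \cup B}{2}$. Then $S(G_1) \setminus B \subseteq S(G_2) \setminus B$.
   Context: For a graph $G$ and $X\subseteq V(G)$, $N_G(X)=\{x\in V(G)\setminus X: xy\in E(G)\text{ for some }y\in X\}$ and $N_G(x)=N_G(\{x\})$. The strong $4$-core $S(G)$ is the maximal set $X\subseteq V(G)$ such that $|N_G(x)\cap X|\ge 4$ for every $x\in X\cup N_G(X)$ (well-defined since the union of two such sets is again such a set). $\triangle$ denotes symmetric difference. *)

(* Defs.v *)
From mathcomp Require Import all_boot.
Set Implicit Arguments. Unset Strict Implicit. Unset Printing Implicit Defensive.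

Definition simple_graph (T : finType) (G : rel T) : Prop :=
  symmetric G /\ irreflexive G.

Definition nbhs (T : finType) (G : rel T) (X : {set T}) : {set T} :=
  [set x | (x \notin X) && [exists y in X, G x y]].

Definition nbh (T : finType) (G : rel T) (x : T) : {set T} := nbhs G [set x].

Definition strong4 (T : finType) (G : rel T) (X : {set T}) : bool :=
  [forall x in X :|: nbhs G X, 4 <= #|nbh G x :&: X|].

(* The strong 4-core: the maximal such set, i.e. the union of all of them
   (this union is itself such a set, as noted in the paper). *)
Definition strong4core (T : finType) (G : rel T) : {set T} :=
  \bigcup_(X : {set T} | strong4 G X) X.

(* Main.v *)
Require Import Defs.
From mathcomp Require Import all_boot.

Lemma in_nbh (T : finType) (G : rel T) x z : (z \in nbh G x) = (z != x) && G z x.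
Proof.
rewrite /nbh /nbhs inE in_set1; congr (_ && _).
apply/existsP/idP => [[w /andP[] /[!inE] /eqP -> //]|h]; exists x; by rewrite inE eqxx.
Qed.

Lemma strong4P (T : finType) (G : rel T) X :
  reflect (forall x, x \in X :|: nbhs G X -> 4 <= #|nbh G x :&: X|) (strong4 G X).
Proof. exact: (iffP forall_inP). Qed.

Lemma strong4U (T : finType) (G : rel T) X Y :
  strong4 G X -> strong4 G Y -> strong4 G (X :|: Y).
Proof.
move=> /strong4P hX /strong4P hY; apply/strong4P => x Hx.
have le1 : forall Z : {set T}, Z \subset X :|: Y -> #|nbh G x :&: Z| <= #|nbh G x :&: (X :|: Y)|.
  by move=> Z HZ; apply: subset_leq_card; apply: setIS.
have [HxX|HxX] := boolP (x \in X :|: nbhs G X).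
  by apply: leq_trans (hX _ HxX) (le1 _ (subsetUl _ _)).
suff HxY : x \in Y :|: nbhs G Y by apply: leq_trans (hY _ HxY) (le1 _ (subsetUr _ _)).
move: HxX; rewrite !inE negb_or => /andP[nX].
move: Hx; rewrite !inE => /orP[/orP[|->]//|/andP[]]; first by rewrite (negbTE nX).
rewrite negb_or => /andP[_ nY] /existsP[w /andP[]]; rewrite inE => /orP[] wi Gw.
  by rewrite nX /= => /negP; case; apply/existsP; exists w; rewrite wi.
by move=> _; apply/orP; right; rewrite nY; apply/existsP; exists w; rewrite wi.
Qed.

Lemma core_strong4 (T : finType) (G : rel T) : strong4 G (strong4core G).
Proof.
rewrite /strong4core; apply: (big_ind (strong4 G)) => //; last exact: strong4U.
apply/strong4P => x; rewrite !inE => /andP[_ /existsP[w]]; by rewrite inE.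
Qed.

Theorem lemma4p4 (T : finType) (G1 G2 : rel T) (A B : {set T}) :
  simple_graph G1 -> simple_graph G2 ->
  A \subset strong4core G2 ->
  nbhs G1 B :|: nbhs G2 B \subset A ->
  (forall x y : T, G1 x y != G2 x y -> (x \in A :|: B) && (y \in A :|: B)) ->
  strong4core G1 :\: B \subset strong4core G2 :\: B.
Proof.
move=> [sy1 _] [sy2 _] AS NA HE.
set X := strong4core G1; set S2 := strong4core G2.
have hE1 : forall u v, u \notin A :|: B -> G1 u v = G2 u v.
  move=> u v hu; apply/eqP; apply/negPn/negP => /HE /andP[h _]; by rewrite h in hu.
have hE2 : forall u v, u \notin A :|: B -> G1 v u = G2 v u.
  move=> u v hu; apply/eqP; apply/negPn/negP => /HE /andP[_ h]; by rewrite h in hu.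
have N1 : forall z w, z \notin B -> w \in B -> G1 z w -> z \in A.
  move=> z w zB wB G; apply: (subsetP NA); rewrite !inE zB /=; apply/orP; left.
  by apply/existsP; exists w; rewrite wB.
have N2 : forall z w, z \notin B -> w \in B -> G2 z w -> z \in A.
  move=> z w zB wB G; apply: (subsetP NA); rewrite !inE zB /=; apply/orP; right.
  by apply/existsP; exists w; rewrite wB.
have hC1 := @core_strong4 T G1; have hC2 := @core_strong4 T G2.
move/strong4P in hC1; move/strong4P in hC2.
set Y := (X :\: B) :|: S2.
have sY : strong4 G2 Y.
  apply/strong4P => y Hy.
  have [HS|HS] := boolP (y \in S2 :|: nbhs G2 S2).
    apply: leq_trans (hC2 y HS) _.
    by apply: subset_leq_card; apply: setIS; apply: subsetUr.
  move: HS; rewrite !inE negb_or => /andP[yS2]; rewrite yS2 /= => /existsP hadj.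
  have hadj' : forall w, w \in S2 -> ~~ G2 y w.
    by move=> w wS; apply/negP => g; apply: hadj; exists w; rewrite wS.
  have yXB : (y \in X :\: B) \/ exists2 z, z \in X :\: B & G2 y z.
    move: Hy; rewrite !inE (negbTE yS2) orbF => /orP[->|/andP[_ /existsP[z /andP[]]]].
      by left.
    rewrite !inE => /orP[zXB g|zS g]; last by move: (hadj' z zS); rewrite g.
    by right; exists z; rewrite // !inE.
  have yA : y \notin A by apply/negP => /(subsetP AS); rewrite (negbTE yS2).
  have yB : y \notin B.
    apply/negP => yB; case: yXB => [|[z]]; first by rewrite inE yB.
    rewrite inE => /andP[zB _] g.
    have zA : z \in A by apply: (N2 z y zB yB); rewrite sy2.
    by move: (hadj' z (subsetP AS z zA)); rewrite g.
  have yAB : y \notin A :|: B by rewrite inE negb_or yA yB.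
  have yX1 : y \in X :|: nbhs G1 X.
    case: yXB => [|[z]]; first by rewrite !inE => /andP[_ ->].
    rewrite !inE => /andP[_ zX] g.
    case: (boolP (y \in X)) => //= _; apply/existsP; exists z; by rewrite zX hE1.
  apply: leq_trans (hC1 y yX1) _.
  apply: subset_leq_card; apply/subsetP => z; rewrite !in_setI !in_nbh.
  move=> /andP[/andP[zy g] zX]; rewrite zy -(hE2 y z yAB) g /=.
  have zB : z \notin B.
    apply/negP => zB; move: (N1 y z yB zB); rewrite sy1 g => /(_ isT).
    by rewrite (negbTE yA).
  by rewrite !inE zB zX.
have YS : Y \subset S2 by exact: (@bigcup_sup T {set T} Y (strong4 G2) (fun Z => Z) sY).
apply/subsetP => x; rewrite !inE => /andP[xB xX]; rewrite xB /=.
by apply: (subsetP YS); rewrite !inE xB xX.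
Qed.
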